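(* Let $\Bbbk$ be a field with $\mathrm{char}(\Bbbk)\ne2$, $n\ge2$, $\mathbb{H}_{2^n}$ the Nichols Hopf algebra and $A$ a unital associative $\Bbbk$-algebra. If $\cdot:\mathbb{H}_{2^n}\otimes A\to A$ is a partial action of $\mathbb{H}_{2^n}$ on $A$ with $g\cdot1_A=1_A$, then $\cdot$ is a global action.
   Context: $\mathbb{H}_{2^n}$ is the Hopf algebra generated by $g,x_1,\dots,x_{n-1}$ with relations $g^2=1$, $x_i^2=0$, $x_ig=-gx_i$, $x_ix_j=-x_jx_i$, $g$ group-like, $\Delta(x_i)=x_i\otimes1+g\otimes x_i$, $\varepsilon(x_i)=0$. A partial action of a bialgebra $H$ on $A$ is a linear map $\cdot:H\otimes A\to A$ with $1_H\cdot a=a$, $h\cdot(ab)=(h_1\cdot a)(h_2\cdot b)$, $h\cdot(k\cdot a)=(h_1\cdot1_A)(h_2k\cdot a)$; it is global if moreover $h\cdot 1_A=\varepsilon(h)1_A$ for all $h$ (equivalently $h\cdot(k\cdot a)=hk\cdot a$). *)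

(* Defs.v *)
From HB Require Import structures.
From mathcomp Require Import all_boot all_order all_algebra.
Set Implicit Arguments. Unset Strict Implicit. Unset Printing Implicit Defensive.
Import GRing.Theory.
Local Open Scope ring_scope.

(* The Nichols Hopf algebra H_{2^n} over a field K, realised concretely on its
   standard basis  g^a x_S  (a : bool, S a subset of the generator indices
   {0,...,n-2}, i.e. x_1,...,x_{n-1}), where x_S = x_{i1} x_{i2} ... x_{ik}
   with i1 < i2 < ... < ik. *)

Definition Hidx (n : nat) := (bool * {set 'I_n.-1})%type.

Notation Hn K n := {ffun Hidx n -> (K%type)^o}.
Notation HHn K n := {ffun (Hidx n * Hidx n)%type -> (K%type)^o}.

Section Nichols.
Variables (K : fieldType) (n : nat).

Definition basisH (i : Hidx n) : Hn K n := [ffun j => (j == i)%:R].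
Definition basisHH (p : Hidx n * Hidx n) : HHn K n := [ffun q => (q == p)%:R].

(* product of basis elements:
   g^a x_S * g^b x_T = (-1)^(b|S|) g^(a+b) x_S x_T, and
   x_S x_T = 0 if S,T meet, else (-1)^#{(i,j) | i in S, j in T, j < i} x_(S u T). *)
Definition bmul (i j : Hidx n) : Hn K n :=
  let: (a, S0) := i in let: (b, T0) := j in
  if [disjoint S0 & T0] then
    ((-1) ^+ (b * #|S0| +
       #|[set p : 'I_n.-1 * 'I_n.-1 | (p.1 \in S0) && (p.2 \in T0) && (p.2 < p.1)%N]|))
      *: basisH (addb a b, S0 :|: T0)
  else 0.

Definition mulH (u v : Hn K n) : Hn K n :=
  \sum_i \sum_j (u i * v j) *: bmul i j.

Definition oneH : Hn K n := basisH (false, set0).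

(* the (untwisted) tensor product algebra H (x) H *)
Definition bmulHH (p q : Hidx n * Hidx n) : HHn K n :=
  [ffun r => bmul p.1 q.1 r.1 * bmul p.2 q.2 r.2].

Definition mulHH (U V : HHn K n) : HHn K n :=
  \sum_p \sum_q (U p * V q) *: bmulHH p q.

Definition oneHH : HHn K n := basisHH ((false, set0), (false, set0)).

Definition DeltaG : HHn K n := basisHH ((true, set0), (true, set0)).
Definition DeltaX (i : 'I_n.-1) : HHn K n :=
  basisHH ((false, [set i]), (false, set0)) + basisHH ((true, set0), (false, [set i])).

(* Delta is the algebra map determined by the generators:
   Delta(g^a x_{i1}...x_{ik}) = Delta(g)^a Delta(x_{i1}) ... Delta(x_{ik}) *)
Definition Delta_basis (i : Hidx n) : HHn K n :=
  let: (a, S0) := i in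
  mulHH (if a then DeltaG else oneHH)
        (foldr (fun j acc => mulHH (DeltaX j) acc) oneHH (enum S0)).

Definition Delta (u : Hn K n) : HHn K n := \sum_i u i *: Delta_basis i.

(* counit: eps(g^a x_S) = 1 if S is empty, 0 otherwise *)
Definition epsH (u : Hn K n) : K := u (false, set0) + u (true, set0).

(* A partial action of H_{2^n} on the K-algebra A: a linear map H (x) A -> A,
   written as a bilinear map, with the three partial action axioms
   (Sweedler sums written out in the basis of H (x) H). *)
Definition is_partial_action (A : algType K) (act : Hn K n -> A -> A) : Prop :=
  (forall h k a, act (h + k) a = act h a + act k a) /\
      (forall (c : K) h a, act (c *: h) a = c *: act h a) /\
      (forall h a b, act h (a + b) = act h a + act h b) /\
      (forall h (c : K) a, act h (c *: a) = c *: act h a) /\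
      (forall a, act oneH a = a) /\
      (forall h a b, act h (a * b) =
          \sum_p Delta h p *: (act (basisH p.1) a * act (basisH p.2) b)) /\
      (forall h k a, act h (act k a) =
          \sum_p Delta h p *: (act (basisH p.1) 1 * act (mulH (basisH p.2) k) a)).

Definition is_global_action (A : algType K) (act : Hn K n -> A -> A) : Prop :=
  is_partial_action act /\ (forall h, act h 1 = epsH h *: 1).

Definition gH : Hn K n := basisH (true, set0).

End Nichols.

(* Main.v *)
Require Import Defs.
From HB Require Import structures.
From mathcomp Require Import all_boot all_order all_algebra.
Import GRing.Theory.
Local Open Scope ring_scope.

Section Helpers.
Variables (K : fieldType) (n : nat).

Lemma expandH (u : Hn K n) : u = \sum_i u i *: basisH K i.
Proof.
apply/ffunP => j; rewrite sum_ffunE (bigD1 j) //= big1 ?addr0.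
  by rewrite !ffunE eqxx; symmetry; exact: mulr1.
by move=> i /negbTE ij; rewrite !ffunE eq_sym ij; exact: mulr0.
Qed.

Lemma expandHH (u : HHn K n) : u = \sum_i u i *: basisHH K i.
Proof.
apply/ffunP => j; rewrite sum_ffunE (bigD1 j) //= big1 ?addr0.
  by rewrite !ffunE eqxx; symmetry; exact: mulr1.
by move=> i /negbTE ij; rewrite !ffunE eq_sym ij; exact: mulr0.
Qed.

Lemma pickH (V : lmodType K) (q : Hidx n) (F : Hidx n -> V) :
  \sum_p basisH K q p *: F p = F q.
Proof.
rewrite (bigD1 q) //= big1 ?addr0; first by rewrite ffunE eqxx scale1r.
by move=> i /negbTE ij; rewrite ffunE ij scale0r.
Qed.

Lemma pickHH (V : lmodType K) (q : Hidx n * Hidx n) (F : Hidx n * Hidx n -> V) :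
  \sum_p basisHH K q p *: F p = F q.
Proof.
rewrite (bigD1 q) //= big1 ?addr0; first by rewrite ffunE eqxx scale1r.
by move=> i /negbTE ij; rewrite ffunE ij scale0r.
Qed.

Lemma bmul1l (j : Hidx n) : bmul K (false, set0) j = basisH K j.
Proof.
case: j => b T /=.
have -> : [disjoint set0 & T] by rewrite -setI_eq0 set0I.
rewrite set0U.
have -> : [set p : 'I_n.-1 * 'I_n.-1 | (p.1 \in set0) && (p.2 \in T) && (p.2 < p.1)%N] = set0.
  by apply/setP => p; rewrite !inE.
by rewrite !cards0 muln0 addn0 expr0 scale1r.
Qed.

Lemma bmul1r (j : Hidx n) : bmul K j (false, set0) = basisH K j.
Proof.
case: j => a S /=.
have -> : [disjoint S & set0] by rewrite -setI_eq0 setI0.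
rewrite setU0.
have -> : [set p : 'I_n.-1 * 'I_n.-1 | (p.1 \in S) && (p.2 \in set0) && (p.2 < p.1)%N] = set0.
  by apply/setP => p; rewrite !inE andbF.
by rewrite !cards0 mul0n addn0 expr0 scale1r addbF.
Qed.

Lemma mulHH1l (U : HHn K n) : mulHH (oneHH K n) U = U.
Proof.
rewrite /mulHH (bigD1 ((false,set0),(false,set0))) //= [X in _ + X]big1 ?addr0.
  rewrite [RHS]expandHH; apply: eq_bigr => q _.
  rewrite ffunE eqxx mul1r; congr (_ *: _).
  by apply/ffunP => r; rewrite !ffunE !bmul1l !ffunE -natrM mulnb -pair_eqE.
move=> p /negbTE pn; apply: big1 => q _; by rewrite ffunE pn mul0r scale0r.
Qed.

Lemma mulHH1r (U : HHn K n) : mulHH U (oneHH K n) = U.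
Proof.
rewrite /mulHH [RHS]expandHH; apply: eq_bigr => p _.
rewrite (bigD1 ((false,set0),(false,set0))) //= big1 ?addr0.
  rewrite ffunE eqxx mulr1; congr (_ *: _).
  by apply/ffunP => r; rewrite !ffunE !bmul1r !ffunE -natrM mulnb -pair_eqE.
move=> q /negbTE pn; by rewrite ffunE pn mulr0 scale0r.
Qed.

Lemma mulH_basis (i j : Hidx n) : mulH (basisH K i) (basisH K j) = bmul K i j.
Proof.
rewrite /mulH (bigD1 i) //= [X in _ + X]big1 ?addr0.
  rewrite (bigD1 j) //= big1 ?addr0; first by rewrite !ffunE !eqxx mulr1 scale1r.
  by move=> k /negbTE kj; rewrite !ffunE kj mulr0 scale0r.
move=> k /negbTE ki; apply: big1 => l _; by rewrite !ffunE ki mul0r scale0r.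
Qed.

Lemma Delta_basisE (i : Hidx n) : Delta (basisH K i) = Delta_basis K i.
Proof. by rewrite /Delta pickH. Qed.

Lemma DeltaXE (i : 'I_n.-1) : Delta (basisH K (false, [set i])) = DeltaX K i.
Proof. by rewrite Delta_basisE /= enum_set1 /= mulHH1r mulHH1l. Qed.

Lemma DeltaGE : Delta (gH K n) = DeltaG K n.
Proof. by rewrite Delta_basisE /= enum_set0 /= mulHH1r. Qed.

Lemma sumDX (V : lmodType K) (i : 'I_n.-1) (F : Hidx n -> Hidx n -> V) :
  \sum_p DeltaX K i p *: F p.1 p.2 =
  F (false,[set i]) (false,set0) + F (true,set0) (false,[set i]).
Proof.
rewrite -(@pickHH V ((false,[set i]),(false,set0)) (fun p => F p.1 p.2)).
rewrite -(@pickHH V ((true,set0),(false,[set i])) (fun p => F p.1 p.2)).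
rewrite -big_split; apply: eq_bigr => p _ /=.
by rewrite /DeltaX ffunE scalerDl.
Qed.

End Helpers.

Theorem proposition4p2 (K : fieldType) (n : nat) (A : algType K)
    (act : Hn K n -> A -> A) :
  (2%:R : K) != 0 -> (2 <= n)%N ->
  is_partial_action act -> act (gH K n) 1 = 1 ->
  is_global_action act.
Proof.
move=> _ _ PA hg; split => //.
have [hadd [hsc [aadd [asc [h1 [hmul hcomp]]]]]] := PA.
have act0 a : act 0 a = 0.
  by have := hsc 0 0 a; rewrite !scale0r.
have act0r h : act h 0 = 0.
  by have := asc h 0 0; rewrite !scale0r.
have actsum a (F : Hidx n -> Hn K n) : act (\sum_i F i) a = \sum_i act (F i) a.
  by rewrite (big_morph (fun h => act h a) (fun h k => hadd h k a) (act0 a)).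
have h1' a : act (basisH K (false,set0)) a = a := h1 a.
have hg' : act (basisH K (true,set0)) 1 = 1 := hg.
have F1 (i : 'I_n.-1) : act (basisH K (false, [set i])) 1 = 0.
  have := hmul (basisH K (false, [set i])) 1 1.
  rewrite mulr1 DeltaXE (@sumDX K n _ _ (fun a b => act (basisH K a) 1 * act (basisH K b) 1)).
  rewrite h1' hg' mul1r mulr1.
  by move/esym/eqP; rewrite -subr_eq0 addrK => /eqP.
have F2 (i : 'I_n.-1) (k : Hn K n) : act (basisH K (false, [set i])) (act k 1) = act (mulH (basisH K (false, [set i])) k) 1.
  rewrite hcomp DeltaXE (@sumDX K n _ _ (fun a b => act (basisH K a) 1 * act (mulH (basisH K b) k) 1)).
  by rewrite F1 hg' mul0r mul1r add0r.
have F3 (k : Hn K n) : act (gH K n) (act k 1) = act (mulH (gH K n) k) 1.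
  by rewrite hcomp DeltaGE /DeltaG pickHH hg mul1r.
have FX : forall S, S != set0 -> act (basisH K (false, S)) 1 = 0.
  move=> S; move: {2}#|S| (leqnn #|S|) => m; elim: m S => [|m IH] S hS.
    by move: hS; rewrite leqn0 cards_eq0 => ->.
  move=> /set0Pn [i0 i0S].
  case: (arg_minnP (fun j : 'I_n.-1 => (j : nat)) i0S) => i iS imin.
  have iS1 : i \in S := iS.
  have -> : basisH K (false, S) = mulH (basisH K (false, [set i])) (basisH K (false, S :\ i)).
    rewrite mulH_basis /= disjoints1 !inE eqxx /=.
    have -> : [set p : 'I_n.-1 * 'I_n.-1 | (p.1 \in [set i]) && (p.2 \in S :\ i) && (p.2 < p.1)%N] = set0.
      apply/setP => p; rewrite !inE; apply/negbTE; apply/negP => /andP [/andP [/eqP -> /andP [_ p2S]]].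
      by rewrite ltnNge imin.
    by rewrite !cards0 mul0n addn0 expr0 scale1r /= setD1K.
  rewrite -F2.
  case: (eqVneq (S :\ i) set0) => [-> | ne].
    by rewrite h1' F1.
  rewrite IH ?act0r //.
  by move: hS; rewrite (cardsD1 i S) iS1 add1n ltnS.
have FB : forall a S, act (basisH K (a, S)) 1 = (S == set0)%:R *: 1.
  move=> [] S; case: (eqVneq S set0) => [-> | ne].
  - by rewrite scale1r hg.
  - have -> : basisH K (true, S) = mulH (gH K n) (basisH K (false, S)).
      rewrite mulH_basis /=.
      have -> : [disjoint set0 & S] by rewrite -setI_eq0 set0I.
      rewrite set0U.
      have -> : [set p : 'I_n.-1 * 'I_n.-1 | (p.1 \in set0) && (p.2 \in S) && (p.2 < p.1)%N] = set0.
        by apply/setP => p; rewrite !inE.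
      by rewrite !cards0 muln0 addn0 expr0 scale1r.
    by rewrite -F3 FX // act0r scale0r.
  - by rewrite scale1r h1.
  - by rewrite FX // scale0r.
move=> h; rewrite {1}(@expandH K n h) actsum.
rewrite (eq_bigr (fun i => (h i * (i.2 == set0)%:R) *: (1 : A))); last first.
  by move=> [a S] _; rewrite hsc FB scalerA.
rewrite -scaler_suml /epsH; congr (_ *: _).
rewrite (bigD1 (false, set0)) //= (bigD1 (true, set0)) //= big1 ?addr0 ?eqxx ?mulr1 //.
move=> [a S] /andP [ne1 ne2] /=; case: (eqVneq S set0) => [eS|_]; last by rewrite mulr0.
by move: ne1 ne2; rewrite eS; case: a; rewrite eqxx.
Qed.
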